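(* Let $n\ge2$ be an integer and $\lambda>0$. Consider the system of ODEs in $(\omega,x,y)\in\mathbb{R}^3$ $$\frac{d\omega}{dt}=x\omega,\qquad \frac{dx}{dt}=X(\omega,x,y):=x^2-xy+n-1-\lambda\omega^2,\qquad \frac{dy}{dt}=xy-nx^2-\lambda\omega^2,$$ restricted to trajectories lying in the half-space $\{\omega>0\}$. Then the regions $$\{x\ge 1,\ X(\omega,x,y)\ge 0\},\quad \{x\le -1,\ X(\omega,x,y)\le 0\},\quad \{y\le 0\}$$ are preserved by the system for increasing $t$, and the regions $$\{x\ge 1,\ X(\omega,x,y)\le 0\},\quad \{x\le -1,\ X(\omega,x,y)\ge 0\},\quad \{y\ge 0\}$$ are preserved by the system for decreasing $t$.
   Context: A set $V\subset\mathbb{R}^3$ is preserved for increasing $t$ if for every solution $\gamma(t)=(\omega(t),x(t),y(t))$ of the system (with $\omega>0$), $\gamma(t_0)\in V$ implies $\gamma(t)\in V$ for all $t>t_0$ for which the solution is defined; preserved for decreasing $t$ is defined analogously with $t<t_0$. Note that along a solution, $X(\omega(t),x(t),y(t))=\frac{dx}{dt}(t)$. *)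

(* Defs.v *)
From Stdlib Require Import Reals.
From Coquelicot Require Import Coquelicot.
Open Scope R_scope.

Definition Xf (n : nat) (lam w x y : R) : R :=
  x ^ 2 - x * y + INR n - 1 - lam * w ^ 2.

Definition Yf (n : nat) (lam w x y : R) : R :=
  x * y - INR n * x ^ 2 - lam * w ^ 2.

Definition in_int (a b : Rbar) (t : R) : Prop :=
  Rbar_lt a (Finite t) /\ Rbar_lt (Finite t) b.

Definition is_solution (n : nat) (lam : R) (a b : Rbar) (w x y : R -> R) : Prop :=
  forall t, in_int a b t ->
    0 < w t /\
    is_derive w t (x t * w t) /\
    is_derive x t (Xf n lam (w t) (x t) (y t)) /\
    is_derive y t (Yf n lam (w t) (x t) (y t)).

Definition preserved_incr (n : nat) (lam : R) (V : R -> R -> R -> Prop) : Prop :=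
  forall a b w x y, is_solution n lam a b w x y ->
  forall t0 t, in_int a b t0 -> in_int a b t -> t0 < t ->
  V (w t0) (x t0) (y t0) -> V (w t) (x t) (y t).

Definition preserved_decr (n : nat) (lam : R) (V : R -> R -> R -> Prop) : Prop :=
  forall a b w x y, is_solution n lam a b w x y ->
  forall t0 t, in_int a b t0 -> in_int a b t -> t < t0 ->
  V (w t0) (x t0) (y t0) -> V (w t) (x t) (y t).

(* Main.v *)
Require Import Defs.
From Stdlib Require Import Reals Lra.
From Coquelicot Require Import Coquelicot.
Open Scope R_scope.

Lemma cont_eps (f : R -> R) (s : R) : continuous f s ->
  forall eps, 0 < eps -> exists al, 0 < al /\ forall z, Rabs (z - s) < al -> Rabs (f z - f s) < eps.
Proof.
  intros Hc eps He.
  destruct (proj1 (filterlim_locally f (f s)) Hc (mkposreal eps He)) as [d Hd].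
  exists d. split. apply cond_pos. intros z Hz. apply (Hd z). exact Hz.
Qed.

Lemma der_cont (f : R -> R) s l : is_derive f s l -> continuous f s.
Proof. intros H. apply (ex_derive_continuous (K:=R_AbsRing) (V:=R_NormedModule)). exists l. exact H. Qed.

Lemma dmin2 (z : R) : is_derive (fun z : R => (Rmin z 0)^2) z (2 * Rmin z 0).
Proof.
  destruct (Rlt_or_le z 0) as [Hz|Hz].
  - assert (H1 : is_derive (fun z : R => z^2) z (2 * z)).
    { apply is_derive_Reals. replace (2*z) with (INR 2 * z^(pred 2)) by (simpl; ring).
      apply derivable_pt_lim_pow. }
    rewrite Rmin_left by lra.
    apply (is_derive_ext_loc (fun z : R => z^2)); [|exact H1].
    exists (mkposreal (-z) ltac:(lra)). intros t Ht.
    change (Rabs (t - z) < - z) in Ht. apply Rabs_def2 in Ht.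
    rewrite Rmin_left; lra.
  - destruct Hz as [Hz|Hz].
    + rewrite Rmin_right by lra. replace (2*0) with 0 by ring.
      apply (is_derive_ext_loc (fun z : R => 0)); [|apply is_derive_Reals, derivable_pt_lim_const].
      exists (mkposreal z Hz). intros t Ht.
      change (Rabs (t - z) < z) in Ht. apply Rabs_def2 in Ht.
      simpl. rewrite (Rmin_right t 0) by lra. ring.
    + subst z. rewrite Rmin_right by lra. replace (2*0) with 0 by ring.
      apply is_derive_Reals. intros eps He. exists (mkposreal eps He). intros h Hh0 Hh.
      simpl in Hh. rewrite Rplus_0_l, (Rmin_right 0 0) by lra.
      replace ((Rmin h 0 ^ 2 - 0 ^ 2) / h - 0) with (Rmin h 0 ^ 2 / h) by (field; auto).
      destruct (Rle_dec h 0).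
      * rewrite Rmin_left by lra. replace (h^2/h) with h by (field; auto). exact Hh.
      * rewrite Rmin_right by lra. replace (0^2/h) with 0 by (field; auto). rewrite Rabs_R0; lra.
Qed.

Lemma dmin2c (u : R -> R) t l : is_derive u t l ->
  is_derive (fun t => (Rmin (u t) 0)^2) t (2 * Rmin (u t) 0 * l).
Proof.
  intros H. eapply is_derive_ext.
  2:{ replace (2 * Rmin (u t) 0 * l) with (scal l (2 * Rmin (u t) 0)).
      apply (is_derive_comp (fun z => (Rmin z 0)^2) u t). apply dmin2. exact H.
      unfold scal; simpl; unfold mult; simpl; ring. }
  intros; simpl; auto.
Qed.

Lemma dopp (f : R -> R) t l : is_derive f (-t) l -> is_derive (fun t => f (- t)) t (- l).
Proof.
  intros H. replace (-l) with (scal (-1) l).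
  apply (is_derive_comp f (fun t => -t) t). exact H.
  auto_derive; auto.
  unfold scal; simpl; unfold mult; simpl; ring.
Qed.

Lemma decr_local (phi dphi : R -> R) lo hi s d C sig tau :
  (forall z, lo < z < hi -> is_derive phi z (dphi z)) ->
  (forall z, Rabs (z - s) < d -> lo < z < hi -> dphi z <= C * phi z) ->
  lo < sig -> s - d < sig -> sig <= s -> phi sig = 0 ->
  sig <= tau -> tau < s + d -> tau < hi -> phi tau <= 0.
Proof.
  intros Hd HC Hlo Hs1 Hs2 H0 Ht1 Ht2 Ht3.
  destruct Ht1 as [Ht1|Ht1]; [|subst; lra].
  set (h := fun z => exp (- C * z) * phi z).
  assert (Hh : forall c, sig <= c <= tau -> derivable_pt_lim h c (exp (- C * c) * (dphi c - C * phi c))).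
  { intros c Hc. apply is_derive_Reals. unfold h.
    eapply is_derive_ext. intros; reflexivity.
    replace (exp (- C * c) * (dphi c - C * phi c)) with
      ((-C) * exp (- C * c) * phi c + exp (- C * c) * dphi c) by ring.
    apply (is_derive_mult (fun z => exp (- C * z)) phi c).
    - apply is_derive_Reals.
      replace (-C * exp (-C * c)) with (exp (-C*c) * (-C * 1)) by ring.
      apply (derivable_pt_lim_comp (fun z => -C * z) exp).
      + apply derivable_pt_lim_scal, derivable_pt_lim_id.
      + apply derivable_pt_lim_exp.
    - apply Hd; lra.
    - intros; unfold mult; simpl; ring. }
  destruct (MVT_cor2 h _ sig tau Ht1 Hh) as [c [Hc1 Hc2]].
  assert (Hneg : exp (- C * c) * (dphi c - C * phi c) <= 0).
  { assert (0 < exp (-C*c)) by apply exp_pos.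
    assert (dphi c <= C * phi c). { apply HC. apply Rabs_def1; lra. lra. }
    nra. }
  unfold h in Hc1; cbv beta in Hc1. rewrite H0 in Hc1.
  assert (Hp : exp (-C*tau) * phi tau <= 0) by nra.
  assert (0 < exp (-C*tau)) by apply exp_pos.
  nra.
Qed.

Lemma gron (phi dphi : R -> R) lo hi t0 t :
  lo < t0 -> t0 <= t -> t < hi ->
  (forall z, lo < z < hi -> is_derive phi z (dphi z)) ->
  (forall z, lo < z < hi -> 0 <= phi z) ->
  phi t0 = 0 ->
  (forall s, t0 <= s <= t -> phi s = 0 ->
     exists d C, 0 < d /\ forall z, Rabs (z - s) < d -> lo < z < hi -> dphi z <= C * phi z) ->
  phi t = 0.
Proof.
  intros Hlo Ht Hhi Hd Hpos H0 Hloc.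
  set (E := fun z => t0 <= z <= t /\ forall sg, t0 <= sg <= z -> phi sg = 0).
  assert (HE0 : E t0). { split. lra. intros sg Hsg. replace sg with t0 by lra. exact H0. }
  destruct (completeness E) as [s [Hub Hlub]].
  { exists t. intros z [Hz _]. lra. }
  { exists t0. exact HE0. }
  assert (Hs1 : t0 <= s) by (apply Hub; exact HE0).
  assert (Hs2 : s <= t) by (apply Hlub; intros z [Hz _]; lra).
  assert (Cl1 : forall sg, t0 <= sg < s -> phi sg = 0).
  { intros sg Hsg. destruct (Req_dec (phi sg) 0) as [e|ne]; [exact e|].
    exfalso. assert (s <= sg); [|lra].
    apply Hlub. intros z [Hz1 Hz2]. destruct (Rle_dec z sg) as [|n]; [assumption|].
    exfalso. apply ne. apply Hz2. lra. }
  assert (Cl2 : phi s = 0).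
  { destruct Hs1 as [Hs1|Hs1]; [|subst s; exact H0].
    destruct (Req_dec (phi s) 0) as [e|ne]; [exact e|]. exfalso.
    assert (Hp : 0 < phi s). { assert (0 <= phi s) by (apply Hpos; lra). lra. }
    destruct (cont_eps phi s (der_cont phi s (dphi s) (Hd s ltac:(lra))) (phi s) Hp) as [al [Hal Hc]].
    set (sg := Rmax t0 (s - al/2)).
    assert (Hsg1 : t0 <= sg) by apply Rmax_l.
    assert (Hsg2 : s - al/2 <= sg) by apply Rmax_r.
    assert (Hsg3 : sg < s) by (unfold sg; apply Rmax_lub_lt; lra).
    assert (Hz : phi sg = 0) by (apply Cl1; lra).
    specialize (Hc sg). rewrite Hz in Hc.
    assert (Rabs (0 - phi s) < phi s). { apply Hc. apply Rabs_def1; lra. }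
    rewrite Rabs_minus_sym, Rminus_0_r, Rabs_pos_eq in H; lra. }
  destruct (Hloc s (conj Hs1 Hs2) Cl2) as [d [C [Hd0 HC]]].
  set (sg := Rmax t0 (s - d/2)).
  assert (Hsg1 : t0 <= sg) by apply Rmax_l.
  assert (Hsg2 : s - d/2 <= sg) by apply Rmax_r.
  assert (Hsg3 : sg <= s) by (unfold sg; apply Rmax_lub; lra).
  assert (Hz : phi sg = 0).
  { destruct Hsg3 as [Hsg3|Hsg3]; [apply Cl1; lra|rewrite Hsg3; exact Cl2]. }
  assert (Cl3 : forall z, sg <= z -> z < s + d -> z < hi -> phi z = 0).
  { intros z Hz1 Hz2 Hz3.
    assert (phi z <= 0) by (eapply (decr_local phi dphi lo hi s d C sg z); eauto; lra).
    assert (0 <= phi z) by (apply Hpos; lra). lra. }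
  destruct Hs2 as [Hs2|Hs2].
  - exfalso. set (t1 := Rmin t (s + d/2)).
    assert (s < t1) by (unfold t1; apply Rmin_glb_lt; lra).
    assert (t1 <= s); [|lra].
    apply Hub. split.
    + split; [|apply Rmin_l]. apply Rmin_glb; lra.
    + intros z Hz0. destruct (Rlt_or_le z s). apply Cl1; lra.
      apply Cl3; try lra. assert (z <= s + d/2) by (eapply Rle_trans; [apply Hz0|apply Rmin_r]). lra.
      assert (z <= t) by (eapply Rle_trans; [apply Hz0|apply Rmin_l]). lra.
  - subst s. exact Cl2.
Qed.

Lemma coop (u v A1 B1 R1 A2 B2 R2 : R -> R) lo hi t0 t :
  lo < t0 -> t0 <= t -> t < hi ->
  (forall z, lo < z < hi -> is_derive u z (A1 z * u z + B1 z * v z + R1 z)) ->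
  (forall z, lo < z < hi -> is_derive v z (A2 z * v z + B2 z * u z + R2 z)) ->
  (forall z, lo < z < hi -> 0 <= R1 z /\ 0 <= R2 z) ->
  (forall z, lo < z < hi -> continuous A1 z /\ continuous A2 z /\ continuous B1 z /\ continuous B2 z) ->
  (forall s, lo < s < hi -> 0 <= u s -> 0 <= v s -> exists d, 0 < d /\
      forall z, Rabs (z - s) < d -> lo < z < hi -> 0 <= B1 z /\ 0 <= B2 z) ->
  0 <= u t0 -> 0 <= v t0 -> 0 <= u t /\ 0 <= v t.
Proof.
  intros Hlo Ht Hhi Hu Hv HR Hc Hloc Hu0 Hv0.
  set (phi := fun z => (Rmin (u z) 0)^2 + (Rmin (v z) 0)^2).
  set (dphi := fun z => 2 * Rmin (u z) 0 * (A1 z * u z + B1 z * v z + R1 z)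
                      + 2 * Rmin (v z) 0 * (A2 z * v z + B2 z * u z + R2 z)).
  assert (Hphi0 : forall z, phi z = 0 -> 0 <= u z /\ 0 <= v z).
  { intros z Hz. unfold phi in Hz.
    assert (Rmin (u z) 0 = 0 /\ Rmin (v z) 0 = 0) as [H1 H2] by (split; nra).
    split; [destruct (Rle_dec 0 (u z))|destruct (Rle_dec 0 (v z))]; auto;
    [rewrite Rmin_left in H1|rewrite Rmin_left in H2]; lra. }
  assert (Hm : forall a, 0 <= a -> Rmin a 0 = 0) by (intros; apply Rmin_right; lra).
  assert (Hg : phi t = 0).
  { apply (gron phi dphi lo hi t0 t); auto.
    - intros z Hz. unfold phi, dphi.
      apply (is_derive_plus (fun z => Rmin (u z) 0 ^ 2) (fun z => Rmin (v z) 0 ^ 2));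
      apply dmin2c; auto.
    - intros z _. unfold phi. nra.
    - unfold phi. rewrite (Hm _ Hu0), (Hm _ Hv0). ring.
    - intros s Hs Hs0. destruct (Hphi0 s Hs0) as [Hus Hvs].
      destruct (Hloc s ltac:(lra) Hus Hvs) as [d [Hd HB]].
      destruct (Hc s ltac:(lra)) as [c1 [c2 [c3 c4]]].
      destruct (cont_eps _ _ c1 1 ltac:(lra)) as [a1 [Ha1 H1]].
      destruct (cont_eps _ _ c2 1 ltac:(lra)) as [a2 [Ha2 H2]].
      destruct (cont_eps _ _ c3 1 ltac:(lra)) as [a3 [Ha3 H3]].
      destruct (cont_eps _ _ c4 1 ltac:(lra)) as [a4 [Ha4 H4]].
      set (K := Rabs (A1 s) + Rabs (A2 s) + Rabs (B1 s) + Rabs (B2 s) + 1).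
      exists (Rmin (Rmin d a1) (Rmin a2 (Rmin a3 a4))), (6 * K). split.
      { repeat apply Rmin_glb_lt; auto. }
      intros z Hz Hzi.
      assert (Hz1 : Rabs (z - s) < d /\ Rabs (z - s) < a1 /\ Rabs (z - s) < a2 /\
                    Rabs (z - s) < a3 /\ Rabs (z - s) < a4).
      { pose proof (Rmin_l (Rmin d a1) (Rmin a2 (Rmin a3 a4))).
        pose proof (Rmin_r (Rmin d a1) (Rmin a2 (Rmin a3 a4))).
        pose proof (Rmin_l d a1). pose proof (Rmin_r d a1).
        pose proof (Rmin_l a2 (Rmin a3 a4)). pose proof (Rmin_r a2 (Rmin a3 a4)).
        pose proof (Rmin_l a3 a4). pose proof (Rmin_r a3 a4). lra. }
      destruct Hz1 as [Hd1 [Hd2 [Hd3 [Hd4 Hd5]]]].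
      destruct (HB z Hd1 Hzi) as [HB1 HB2].
      destruct (HR z Hzi) as [HR1 HR2].
      specialize (H1 z Hd2). specialize (H2 z Hd3). specialize (H3 z Hd4). specialize (H4 z Hd5).
      assert (E1 : Rabs (A1 z) <= K).
      { unfold K. pose proof (Rabs_triang_inv (A1 z) (A1 s)).
        pose proof (Rabs_pos (A2 s)). pose proof (Rabs_pos (B1 s)). pose proof (Rabs_pos (B2 s)). lra. }
      assert (E2 : Rabs (A2 z) <= K).
      { unfold K. pose proof (Rabs_triang_inv (A2 z) (A2 s)).
        pose proof (Rabs_pos (A1 s)). pose proof (Rabs_pos (B1 s)). pose proof (Rabs_pos (B2 s)). lra. }
      assert (E3 : B1 z <= K).
      { unfold K. pose proof (Rabs_triang_inv (B1 z) (B1 s)). pose proof (Rle_abs (B1 z)).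
        pose proof (Rabs_pos (A1 s)). pose proof (Rabs_pos (A2 s)). pose proof (Rabs_pos (B2 s)). lra. }
      assert (E4 : B2 z <= K).
      { unfold K. pose proof (Rabs_triang_inv (B2 z) (B2 s)). pose proof (Rle_abs (B2 z)).
        pose proof (Rabs_pos (A1 s)). pose proof (Rabs_pos (A2 s)). pose proof (Rabs_pos (B1 s)). lra. }
      unfold dphi, phi.
      set (p := Rmin (u z) 0). set (q := Rmin (v z) 0).
      assert (Pp : p <= 0) by apply Rmin_r.
      assert (Pq : q <= 0) by apply Rmin_r.
      assert (Pu : p * u z = p ^ 2).
      { unfold p. destruct (Rle_dec 0 (u z)). rewrite Hm; auto; ring. rewrite Rmin_left; lra. }
      assert (Pv : q * v z = q ^ 2).
      { unfold q. destruct (Rle_dec 0 (v z)). rewrite Hm; auto; ring. rewrite Rmin_left; lra. }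
      assert (Qu : q <= u z -> True) by auto.
      assert (Pv' : q <= v z) by apply Rmin_l.
      assert (Pu' : p <= u z) by apply Rmin_l.
      assert (F1 : B1 z * (p * v z) <= K * (p^2 + q^2)).
      { assert (p * v z <= p * q) by (assert (0 <= -p * (v z - q)) by (apply Rmult_le_pos; lra); nra).
        assert (0 <= p * q) by (assert (0 <= -p * -q) by (apply Rmult_le_pos; lra); nra).
        assert (p * q <= (p^2+q^2)/2) by (pose proof (pow2_ge_0 (p-q)); nra).
        assert (B1 z * (p * v z) <= B1 z * (p * q)) by nra. nra. }
      assert (F2 : B2 z * (q * u z) <= K * (p^2 + q^2)).
      { assert (q * u z <= q * p) by (assert (0 <= -q * (u z - p)) by (apply Rmult_le_pos; lra); nra).
        assert (0 <= p * q) by (assert (0 <= -p * -q) by (apply Rmult_le_pos; lra); nra).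
        assert (p * q <= (p^2+q^2)/2) by (pose proof (pow2_ge_0 (p-q)); nra).
        assert (B2 z * (q * u z) <= B2 z * (q * p)) by nra. nra. }
      assert (F3 : A1 z * p^2 <= K * p^2).
      { pose proof (Rle_abs (A1 z)). assert (0 <= p^2) by nra. nra. }
      assert (F4 : A2 z * q^2 <= K * q^2).
      { pose proof (Rle_abs (A2 z)). assert (0 <= q^2) by nra. nra. }
      assert (F5 : p * R1 z <= 0) by nra.
      assert (F6 : q * R2 z <= 0) by nra.
      assert (G : 2 * p * (A1 z * u z + B1 z * v z + R1 z) + 2 * q * (A2 z * v z + B2 z * u z + R2 z)
                = 2 * (A1 z * (p * u z)) + 2 * (B1 z * (p * v z)) + 2 * (p * R1 z)
                  + 2 * (A2 z * (q * v z)) + 2 * (B2 z * (q * u z)) + 2 * (q * R2 z)) by ring.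
      rewrite G, Pu, Pv. lra. }
  apply Hphi0, Hg.
Qed.

Lemma cont_opp (f : R -> R) z : continuous f (- z) -> continuous (fun t => f (- t)) z.
Proof.
  intros H. apply (continuous_comp (fun t : R => - t) f). 
  apply (der_cont (fun t => -t) z (-1)). auto_derive; auto. exact H.
Qed.

Lemma coop_back (u v A1 B1 R1 A2 B2 R2 : R -> R) lo hi t0 t :
  lo < t -> t <= t0 -> t0 < hi ->
  (forall z, lo < z < hi -> is_derive u z (- (A1 z * u z + B1 z * v z + R1 z))) ->
  (forall z, lo < z < hi -> is_derive v z (- (A2 z * v z + B2 z * u z + R2 z))) ->
  (forall z, lo < z < hi -> 0 <= R1 z /\ 0 <= R2 z) ->
  (forall z, lo < z < hi -> continuous A1 z /\ continuous A2 z /\ continuous B1 z /\ continuous B2 z) ->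
  (forall s, lo < s < hi -> 0 <= u s -> 0 <= v s -> exists d, 0 < d /\
      forall z, Rabs (z - s) < d -> lo < z < hi -> 0 <= B1 z /\ 0 <= B2 z) ->
  0 <= u t0 -> 0 <= v t0 -> 0 <= u t /\ 0 <= v t.
Proof.
  intros Hlo Ht Hhi Hu Hv HR Hc Hloc Hu0 Hv0.
  pose proof (coop (fun z => u (-z)) (fun z => v (-z)) (fun z => A1 (-z)) (fun z => B1 (-z))
    (fun z => R1 (-z)) (fun z => A2 (-z)) (fun z => B2 (-z)) (fun z => R2 (-z))
    (-hi) (-lo) (-t0) (-t)) as H.
  cut (0 <= u (- - t) /\ 0 <= v (- - t)). { rewrite Ropp_involutive; auto. }
  apply H; clear H; try lra; try (cbv beta; rewrite Ropp_involutive; auto).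
  - intros z Hz. pattern (A1 (- z) * u (- z) + B1 (- z) * v (- z) + R1 (- z)) at 1.
    rewrite <- Ropp_involutive. apply dopp. apply Hu. lra.
  - intros z Hz. pattern (A2 (- z) * v (- z) + B2 (- z) * u (- z) + R2 (- z)) at 1.
    rewrite <- Ropp_involutive. apply dopp. apply Hv. lra.
  - intros z Hz. apply HR. lra.
  - intros z Hz. destruct (Hc (-z) ltac:(lra)) as [c1 [c2 [c3 c4]]].
    repeat split; apply cont_opp; auto.
  - intros s Hs H1 H2. destruct (Hloc (-s) ltac:(lra) H1 H2) as [d [Hd HB]].
    exists d. split; auto. intros z Hz Hzi. apply HB; [|lra].
    replace (- z - - s) with (- (z - s)) by ring. rewrite Rabs_Ropp. exact Hz.
Qed.

Lemma int_nbhd a b t1 t2 : Defs.in_int a b t1 -> Defs.in_int a b t2 ->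
  exists lo hi, lo < t1 /\ t2 < hi /\ forall z, lo < z < hi -> Defs.in_int a b z.
Proof.
  intros [H1 H2] [H3 H4].
  destruct a as [a| |]; destruct b as [b| |]; simpl in *; try contradiction.
  - exists a, b. repeat split; simpl; lra.
  - exists a, (t2 + 1). repeat split; simpl; lra.
  - exists (t1 - 1), b. repeat split; simpl; lra.
  - exists (t1 - 1), (t2 + 1). repeat split; simpl; lra.
Qed.

Ltac sder w x y Hw Hx Hy :=
  auto_derive; [ repeat split; try (eexists; eassumption); try exact I
               | try rewrite (is_derive_unique (fun t : R => w t) _ _ Hw);
                 try rewrite (is_derive_unique (fun t : R => x t) _ _ Hx);
                 try rewrite (is_derive_unique (fun t : R => y t) _ _ Hy); unfold Xf, Yf; ring ].

Ltac scont Hw Hx Hy :=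
  apply (ex_derive_continuous (K:=R_AbsRing) (V:=R_NormedModule));
  auto_derive; repeat split; try (eexists; eassumption); try exact I.

Lemma test n lam a b w x y z : is_solution n lam a b w x y -> Defs.in_int a b z ->
  is_derive (fun t => Xf n lam (w t) (x t) (y t)) z
   ((3 * x z - y z) * Xf n lam (w z) (x z) (y z) + (INR n - 1) * x z * (x z + 1) * (x z - 1)).
Proof.
  intros Hs Hz. destruct (Hs z Hz) as [Hp [Hw [Hx Hy]]].
  unfold Xf at 1. sder w x y Hw Hx Hy.
Qed.

Ltac dsol Hs Hin z Hz := let Hp := fresh "Hp" in let Hw := fresh "Hw" in
  let Hx := fresh "Hx" in let Hy := fresh "Hy" in
  destruct (Hs z (Hin z Hz)) as [Hp [Hw [Hx [Hy]]]].

Ltac gder w x y Hs Hin :=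
  let z := fresh "z" in let Hz := fresh "Hz" in
  intros z Hz; destruct (Hs z (Hin z Hz)) as [? [Hw [Hx Hy]]]; cbv beta; unfold Xf, Yf;
  sder w x y Hw Hx Hy.

Ltac gcont w x y Hs Hin :=
  let z := fresh "z" in let Hz := fresh "Hz" in
  intros z Hz; destruct (Hs z (Hin z Hz)) as [? [Hw [Hx Hy]]];
  repeat split; scont Hw Hx Hy.

Theorem lemma3p2 (n : nat) (lam : R) (hn : (2 <= n)%nat) (hlam : 0 < lam) :
  preserved_incr n lam (fun w x y => 1 <= x /\ 0 <= Xf n lam w x y) /\
  preserved_incr n lam (fun w x y => x <= -1 /\ Xf n lam w x y <= 0) /\
  preserved_incr n lam (fun w x y => y <= 0) /\
  preserved_decr n lam (fun w x y => 1 <= x /\ Xf n lam w x y <= 0) /\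
  preserved_decr n lam (fun w x y => x <= -1 /\ 0 <= Xf n lam w x y) /\
  preserved_decr n lam (fun w x y => 0 <= y).
Proof.
  assert (Hn2 : 2 <= INR n) by (replace 2 with (INR 2) by (simpl; ring); apply le_INR; exact hn).
  split; [|split; [|split; [|split; [|split]]]].
  - intros a b w x y Hs t0 t H0 H1 Hlt HV.
    destruct (int_nbhd a b t0 t H0 H1) as [lo [hi [Hlo [Hhi Hin]]]].
    assert (0 <= x t - 1 /\ 0 <= Xf n lam (w t) (x t) (y t)); [|lra].
    refine (coop (fun z => x z - 1) (fun z => Xf n lam (w z) (x z) (y z)) (fun _ => 0) (fun _ => 1)
      (fun _ => 0) (fun z => 3 * x z - y z) (fun z => (INR n - 1) * x z * (x z + 1)) (fun _ => 0)
      lo hi t0 t Hlo (Rlt_le _ _ Hlt) Hhi _ _ _ _ _ _ _); cbv beta.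
    + gder w x y Hs Hin.
    + gder w x y Hs Hin.
    + intros; lra.
    + gcont w x y Hs Hin.
    + intros s Hsi Hu Hv. destruct (Hs s (Hin s Hsi)) as [_ [_ [Hx _]]].
      destruct (cont_eps x s (der_cont _ _ _ Hx) 1 ltac:(lra)) as [d [Hd Hc]].
      exists d. split; auto. intros z Hz Hzi. specialize (Hc z Hz). apply Rabs_def2 in Hc.
      split; [lra|]. apply Rmult_le_pos; [apply Rmult_le_pos|]; lra.
    + lra.
    + lra.
  - intros a b w x y Hs t0 t H0 H1 Hlt HV.
    destruct (int_nbhd a b t0 t H0 H1) as [lo [hi [Hlo [Hhi Hin]]]].
    assert (0 <= -1 - x t /\ 0 <= - Xf n lam (w t) (x t) (y t)); [|lra].
    refine (coop (fun z => -1 - x z) (fun z => - Xf n lam (w z) (x z) (y z)) (fun _ => 0) (fun _ => 1)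
      (fun _ => 0) (fun z => 3 * x z - y z) (fun z => (INR n - 1) * x z * (x z - 1)) (fun _ => 0)
      lo hi t0 t Hlo (Rlt_le _ _ Hlt) Hhi _ _ _ _ _ _ _); cbv beta.
    + gder w x y Hs Hin.
    + gder w x y Hs Hin.
    + intros; lra.
    + gcont w x y Hs Hin.
    + intros s Hsi Hu Hv. destruct (Hs s (Hin s Hsi)) as [_ [_ [Hx _]]].
      destruct (cont_eps x s (der_cont _ _ _ Hx) 1 ltac:(lra)) as [d [Hd Hc]].
      exists d. split; auto. intros z Hz Hzi. specialize (Hc z Hz). apply Rabs_def2 in Hc.
      split; [lra|]. replace ((INR n - 1) * x z * (x z - 1)) with ((INR n - 1) * (- x z) * (1 - x z)) by ring.
      apply Rmult_le_pos; [apply Rmult_le_pos|]; lra.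
    + lra.
    + lra.
  - intros a b w x y Hs t0 t H0 H1 Hlt HV.
    destruct (int_nbhd a b t0 t H0 H1) as [lo [hi [Hlo [Hhi Hin]]]].
    assert (0 <= - y t /\ 0 <= 1); [|lra].
    refine (coop (fun z => - y z) (fun z => 1) (fun z => x z) (fun _ => 0)
      (fun z => INR n * x z ^ 2 + lam * w z ^ 2) (fun _ => 0) (fun _ => 0) (fun _ => 0)
      lo hi t0 t Hlo (Rlt_le _ _ Hlt) Hhi _ _ _ _ _ _ _); cbv beta.
    + gder w x y Hs Hin.
    + gder w x y Hs Hin.
    + intros z Hz. split; [|lra]. pose proof (pow2_ge_0 (x z)). pose proof (pow2_ge_0 (w z)). nra.
    + gcont w x y Hs Hin.
    + intros s Hsi Hu Hv. exists 1. split; [lra|]. intros; lra.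
    + lra.
    + lra.
  - intros a b w x y Hs t0 t H0 H1 Hlt HV.
    destruct (int_nbhd a b t t0 H1 H0) as [lo [hi [Hlo [Hhi Hin]]]].
    assert (0 <= x t - 1 /\ 0 <= - Xf n lam (w t) (x t) (y t)); [|lra].
    refine (coop_back (fun z => x z - 1) (fun z => - Xf n lam (w z) (x z) (y z)) (fun _ => 0) (fun _ => 1)
      (fun _ => 0) (fun z => - (3 * x z - y z)) (fun z => (INR n - 1) * x z * (x z + 1)) (fun _ => 0)
      lo hi t0 t Hlo (Rlt_le _ _ Hlt) Hhi _ _ _ _ _ _ _); cbv beta.
    + gder w x y Hs Hin.
    + gder w x y Hs Hin.
    + intros; lra.
    + gcont w x y Hs Hin.
    + intros s Hsi Hu Hv. destruct (Hs s (Hin s Hsi)) as [_ [_ [Hx _]]].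
      destruct (cont_eps x s (der_cont _ _ _ Hx) 1 ltac:(lra)) as [d [Hd Hc]].
      exists d. split; auto. intros z Hz Hzi. specialize (Hc z Hz). apply Rabs_def2 in Hc.
      split; [lra|]. apply Rmult_le_pos; [apply Rmult_le_pos|]; lra.
    + lra.
    + lra.
  - intros a b w x y Hs t0 t H0 H1 Hlt HV.
    destruct (int_nbhd a b t t0 H1 H0) as [lo [hi [Hlo [Hhi Hin]]]].
    assert (0 <= -1 - x t /\ 0 <= Xf n lam (w t) (x t) (y t)); [|lra].
    refine (coop_back (fun z => -1 - x z) (fun z => Xf n lam (w z) (x z) (y z)) (fun _ => 0) (fun _ => 1)
      (fun _ => 0) (fun z => - (3 * x z - y z)) (fun z => (INR n - 1) * x z * (x z - 1)) (fun _ => 0)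
      lo hi t0 t Hlo (Rlt_le _ _ Hlt) Hhi _ _ _ _ _ _ _); cbv beta.
    + gder w x y Hs Hin.
    + gder w x y Hs Hin.
    + intros; lra.
    + gcont w x y Hs Hin.
    + intros s Hsi Hu Hv. destruct (Hs s (Hin s Hsi)) as [_ [_ [Hx _]]].
      destruct (cont_eps x s (der_cont _ _ _ Hx) 1 ltac:(lra)) as [d [Hd Hc]].
      exists d. split; auto. intros z Hz Hzi. specialize (Hc z Hz). apply Rabs_def2 in Hc.
      split; [lra|]. replace ((INR n - 1) * x z * (x z - 1)) with ((INR n - 1) * (- x z) * (1 - x z)) by ring.
      apply Rmult_le_pos; [apply Rmult_le_pos|]; lra.
    + lra.
    + lra.
  - intros a b w x y Hs t0 t H0 H1 Hlt HV.
    destruct (int_nbhd a b t t0 H1 H0) as [lo [hi [Hlo [Hhi Hin]]]].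
    assert (0 <= y t /\ 0 <= 1); [|lra].
    refine (coop_back (fun z => y z) (fun z => 1) (fun z => - x z) (fun _ => 0)
      (fun z => INR n * x z ^ 2 + lam * w z ^ 2) (fun _ => 0) (fun _ => 0) (fun _ => 0)
      lo hi t0 t Hlo (Rlt_le _ _ Hlt) Hhi _ _ _ _ _ _ _); cbv beta.
    + gder w x y Hs Hin.
    + gder w x y Hs Hin.
    + intros z Hz. split; [|lra]. pose proof (pow2_ge_0 (x z)). pose proof (pow2_ge_0 (w z)). nra.
    + gcont w x y Hs Hin.
    + intros s Hsi Hu Hv. exists 1. split; [lra|]. intros; lra.
    + lra.
    + lra.
Qed.
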